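(* Let $\Sigma$ be a ranked alphabet, $B$ a strong bimonoid and $\mathcal{A}=(Q,\delta,F)$ a $(\Sigma,B)$-wta such that $\mathcal{N}(\mathcal{A})$ is finite. Let $U_{\mathcal{A}}$ be the set of all crisp-deterministic $(\Sigma,B)$-wta $\mathcal{B}$ such that for every $q\in Q$ there is a final variant $\mathcal{B}'$ of $\mathcal{B}$ with $h^q_{\mathrm{V}(\mathcal{A})}=[\![\mathcal{B}']\!]^{\mathrm{init}}$. Then $\mathrm{rel}(\mathcal{N}(\mathcal{A}))$ is minimal in $U_{\mathcal{A}}$ with respect to the number of states, i.e., $\mathrm{rel}(\mathcal{N}(\mathcal{A}))\in U_{\mathcal{A}}$ and no element of $U_{\mathcal{A}}$ has fewer states.
   Context: Ranked alphabet $\Sigma$ ($\Sigma^{(0)}\ne\emptyset$), trees $T_\Sigma$; strong bimonoid $(B,\oplus,\otimes,\mathbb{0},\mathbb{1})$ (commutative monoid $(B,\oplus,\mathbb{0})$, monoid $(B,\otimes,\mathbb{1})$, $\mathbb{0}\ne\mathbb{1}$, $\mathbb{0}$ absorbing, no distributivity). $(\Sigma,B)$-wta $\mathcal{A}=(Q,\delta,F)$: $Q$ finite nonempty (the states), $\delta_k:Q^k\times\Sigma^{(k)}\times Q\to B$, $F:Q\to B$. Vector algebra $\mathrm{V}(\mathcal{A})=(B^Q,\delta_{\mathcal{A}})$, $\delta_{\mathcal{A}}(\sigma)(v_1,\dots,v_k)_q=\bigoplus_{p_1,\dots,p_k}\big(\bigotimes_{i=1}^k(v_i)_{p_i}\big)\otimes\delta_k(p_1\dots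 p_k,\sigma,q)$; $h_{\mathrm{V}(\mathcal{A})}:T_\Sigma\to B^Q$ the unique homomorphism; $h^q_{\mathrm{V}(\mathcal{A})}(\xi)=h_{\mathrm{V}(\mathcal{A})}(\xi)_q$; $[\![\mathcal{A}]\!]^{\mathrm{init}}(\xi)=\bigoplus_q h_{\mathrm{V}(\mathcal{A})}(\xi)_q\otimes F_q$. Crisp-deterministic: for all $k,\sigma\in\Sigma^{(k)},q_1,\dots,q_k$ a unique $q$ with $\delta_k(q_1\dots q_k,\sigma,q)=\mathbb{1}$, all other values $\mathbb{0}$. A final variant of $(Q,\delta,F)$ is $(Q,\delta,F')$ with arbitrary $F':Q\to B$. Nerode algebra $\mathcal{N}(\mathcal{A})=(Q_{\mathcal{N}},\theta_{\mathcal{N}},F_{\mathcal{N}})$: smallest subalgebra of $\mathrm{V}(\mathcal{A})$ (carrier $\mathrm{im}(h_{\mathrm{V}(\mathcal{A})})$) with $(F_{\mathcal{N}})_v=\bigoplus_q v_q\otimes F_q$; finite if $Q_{\mathcal{N}}$ finite. For a finite $(\Sigma,B)$-algebra $(P,\theta,G)$, $\mathrm{rel}(P,\theta,G)$ is the crisp-deterministic wta $(P,\delta',G)$ with $\delta'_k(p_1\dots p_k,\sigma,p)=\mathbb{1}$ iff $\theta(\sigma)(p_1,\dots,p_k)=p$, else $\mathbb{0}$. *)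

(* Defs.v *)
From HB Require Import structures.
From mathcomp Require Import all_boot.
From mathcomp Require Import boolp.
From Stdlib Require List.

Set Implicit Arguments.
Unset Strict Implicit.
Unset Printing Implicit Defensive.

(* No distributivity is assumed.                                          *)
Record strong_bimonoid (B : Type) := StrongBimonoid {
  sb_add : B -> B -> B;
  sb_mul : B -> B -> B;
  sb_zero : B;
  sb_one : B;
  sb_addA : associative sb_add;
  sb_addC : commutative sb_add;
  sb_add0 : left_id sb_zero sb_add;
  sb_mulA : associative sb_mul;
  sb_mul1l : left_id sb_one sb_mul;
  sb_mul1r : right_id sb_one sb_mul;
  sb_mul0l : left_zero sb_zero sb_mul;
  sb_mul0r : right_zero sb_zero sb_mul;
  sb_zero_neq_one : sb_zero <> sb_one
}.

Inductive tree (Sigma : Type) (rk : Sigma -> nat) : Type :=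
  Node (a : Sigma) of ('I_(rk a) -> tree rk).
Arguments Node {Sigma rk} a _.

(* delta_k(p_1 ... p_k, a, q) with k = rk a and ps = (p_1,...,p_k).       *)
(* Nonemptiness of Q is imposed separately (wta_nonempty).                *)
Record wta (Sigma : finType) (rk : Sigma -> nat) (B : Type) := Wta {
  st : finType;
  delta : forall a : Sigma, {ffun 'I_(rk a) -> st} -> st -> B;
  fin : st -> B
}.
Arguments Wta {Sigma rk B} st delta fin.
Arguments st {Sigma rk B} w.
Arguments delta {Sigma rk B} w a _ _.
Arguments fin {Sigma rk B} w _.

Definition wta_nonempty Sigma rk B (A : @wta Sigma rk B) : Prop :=
  0 < #|st A|.

Definition vdelta Sigma rk B (S : strong_bimonoid B) (A : @wta Sigma rk B)
  (a : Sigma) (vs : 'I_(rk a) -> (st A -> B)) : st A -> B :=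
  fun q => \big[sb_add S / sb_zero S]_(ps : {ffun 'I_(rk a) -> st A})
             sb_mul S (\big[sb_mul S / sb_one S]_(i < rk a) vs i (ps i))
                      (delta A a ps q).
Arguments vdelta {Sigma rk B} S A {a} vs _.

Fixpoint hV Sigma rk B (S : strong_bimonoid B) (A : @wta Sigma rk B)
  (t : tree rk) : st A -> B :=
  match t with
  | Node a ts => vdelta S A (fun i => @hV Sigma rk B S A (ts i))
  end.
Arguments hV {Sigma rk B} S A t _.

Definition run_init Sigma rk B (S : strong_bimonoid B) (A : @wta Sigma rk B)
  (t : tree rk) : B :=
  \big[sb_add S / sb_zero S]_(q : st A) sb_mul S (hV S A t q) (fin A q).

Definition crisp_deterministic Sigma rk B (S : strong_bimonoid B)
  (A : @wta Sigma rk B) : Prop :=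
  forall (a : Sigma) (ps : {ffun 'I_(rk a) -> st A}),
    exists q : st A, delta A a ps q = sb_one S /\
      forall q' : st A, q' <> q -> delta A a ps q' = sb_zero S.

Definition final_variant Sigma rk B (A : @wta Sigma rk B) (F' : st A -> B)
  : @wta Sigma rk B := Wta (st A) (delta A) F'.
Arguments final_variant {Sigma rk B} A F'.

Definition in_UA Sigma rk B (S : strong_bimonoid B)
  (A Bw : @wta Sigma rk B) : Prop :=
  wta_nonempty Bw /\ crisp_deterministic S Bw /\
  forall q : st A, exists F' : st Bw -> B,
    forall t : tree rk, hV S A t q = run_init S (final_variant Bw F') t.

(* Nerode algebra N(A): carrier im(h_{V(A)}) (a subset of B^Q).           *)
Definition nerode_finite Sigma rk B (S : strong_bimonoid B)
  (A : @wta Sigma rk B) : Prop :=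
  exists s : seq (st A -> B), forall t : tree rk, List.In (hV S A t) s.

Definition in_image Sigma rk B (S : strong_bimonoid B) (A : @wta Sigma rk B)
  (v : {classic (st A -> B)}) : bool :=
  `[< exists t : tree rk, hV S A t = v >].
Arguments in_image {Sigma rk B} S A v.

Definition nerode_list Sigma rk B (S : strong_bimonoid B) (A : @wta Sigma rk B)
  : seq {classic (st A -> B)} :=
  match pselect (nerode_finite S A) with
  | left H => undup [seq v <- (sval (cid H) : seq {classic (st A -> B)})
                     | in_image S A v]
  | right _ => [::]
  end.

Definition nerode_states Sigma rk B (S : strong_bimonoid B)
  (A : @wta Sigma rk B) : finType := seq_sub (nerode_list S A).

(* rel(N(A)) = (Q_N, delta', F_N), where delta'(v_1..v_k, a, v) = 1 iff
   theta_N(a)(v_1,..,v_k) = v, theta_N being the restriction of delta_A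
   to Q_N, and (F_N)_v = (+)_q v_q (x) F_q. *)
Definition rel_nerode Sigma rk B (S : strong_bimonoid B) (A : @wta Sigma rk B)
  : @wta Sigma rk B :=
  Wta (nerode_states S A)
    (fun a ps p =>
       if ((vdelta S A (fun i => (val (ps i) : st A -> B))
              : {classic (st A -> B)}) == val p)
       then sb_one S else sb_zero S)
    (fun p => \big[sb_add S / sb_zero S]_(q : st A)
                 sb_mul S ((val p : st A -> B) q) (fin A q)).

(* Main.v *)
Require Import Defs.
From HB Require Import structures.
From mathcomp Require Import all_boot.
From mathcomp Require Import boolp.

Section Aux.
Variables (B : Type) (S : strong_bimonoid B).
HB.instance Definition _ := Monoid.isComLaw.Build B (sb_zero S) (sb_add S)
  (@sb_addA _ S) (@sb_addC _ S) (@sb_add0 _ S).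

Lemma sum_single (T : finType) (F : T -> B) x0 :
  (forall x, x != x0 -> F x = sb_zero S) -> \big[sb_add S/sb_zero S]_x F x = F x0.
Proof. move=> H. rewrite (bigD1 x0) //= big1 ?Monoid.mulm1 //. Qed.

Lemma prod_zero n (F : 'I_n -> B) i :
  F i = sb_zero S -> \big[sb_mul S/sb_one S]_(j < n) F j = sb_zero S.
Proof.
elim: n F i => [|n IH] F i Hi; first by case: i {Hi}.
rewrite big_ord_recl.
move: Hi; case: (unliftP ord0 i) => [j ->|->] Hi.
  by rewrite (IH _ j Hi) sb_mul0r.
by rewrite Hi sb_mul0l.
Qed.

Lemma prod_one n (F : 'I_n -> B) :
  (forall i, F i = sb_one S) -> \big[sb_mul S/sb_one S]_(j < n) F j = sb_one S.
Proof.
move=> H; apply: (big_ind (fun x => x = sb_one S)) => //.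
by move=> x y -> ->; rewrite sb_mul1l.
Qed.
End Aux.

Lemma hV_fv Sigma rk B (S : strong_bimonoid B) (W : @wta Sigma rk B) F' t :
  hV S (final_variant W F') t = hV S W t.
Proof.
elim: t => a ts IH /=.
have -> : (fun i => hV S (final_variant W F') (ts i)) = (fun i => hV S W (ts i)).
  by apply: funext => i; apply: IH.
by [].
Qed.

Lemma crisp_run Sigma rk B (S : strong_bimonoid B) (W : @wta Sigma rk B) :
  crisp_deterministic S W -> forall t, exists s : st W,
    forall p, hV S W t p = if p == s then sb_one S else sb_zero S.
Proof.
move=> HW; elim=> a ts IH.
pose c := [ffun i => sval (cid (IH i))].
have Hc : forall i p, hV S W (ts i) p = if p == c i then sb_one S else sb_zero S.
  by move=> i p; rewrite ffunE; case: (cid (IH i)) => s Hs /=; apply: Hs.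
have [s [Hs1 Hs0]] := HW a c.
exists s => p /=; rewrite /vdelta.
rewrite (@sum_single _ S _ _ c); last first.
  move=> ps Hps.
  case: (boolP [exists i, ps i != c i]) => [/existsP [i Hi]|Hn].
    by rewrite (@prod_zero _ S _ _ i) ?sb_mul0l // Hc (negbTE Hi).
  case/eqP: Hps; apply/ffunP => i.
  by apply/eqP; move/existsPn: Hn => /(_ i); rewrite negbK.
rewrite prod_one ?sb_mul1l; last by move=> i; rewrite Hc eqxx.
case: eqP => [->//|/Hs0 //].
Qed.

Section Nerode.
Variables (Sigma : finType) (rk : Sigma -> nat) (B : Type)
  (S : strong_bimonoid B) (A : @wta Sigma rk B).
Hypothesis Hfin : nerode_finite S A.

Lemma nl_uniq : uniq (nerode_list S A).
Proof. by rewrite /nerode_list; case: pselect => // H; apply: undup_uniq. Qed.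

Lemma nl_mem (v : {classic (st A -> B)}) :
  (v \in nerode_list S A) <-> exists t, hV S A t = v.
Proof.
rewrite /nerode_list; case: pselect => [H|//]; rewrite mem_undup mem_filter.
case: (cid H) => s Hs /=.
split; first by case/andP => /asboolP.
case=> t Ht; apply/andP; split; first by apply/asboolP; exists t.
subst v; have := Hs t.
elim: s {Hs} => //= x s IHs [->|/IHs]; rewrite inE ?eqxx //.
by move=> ->; rewrite orbT.
Qed.
End Nerode.

Theorem theorem6p9 (Sigma : finType) (rk : Sigma -> nat)
  (HSigma0 : exists a : Sigma, rk a = 0%N)
  (B : Type) (S : strong_bimonoid B) (A : @wta Sigma rk B)
  (HA : wta_nonempty A)
  (Hfin : nerode_finite S A) :
  in_UA S A (rel_nerode S A) /\
  forall Bw : @wta Sigma rk B, in_UA S A Bw ->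
    #|st (rel_nerode S A)| <= #|st Bw|.
Proof.
have NL := @nl_mem _ _ _ S A Hfin.
have mem_hV : forall t, (hV S A t : {classic (st A -> B)}) \in nerode_list S A.
  by move=> t; apply/NL; exists t.
have Hcard : #|st (rel_nerode S A)| = size (nerode_list S A).
  by rewrite /= card_seq_sub // (@nl_uniq _ _ _ S A).
have Hind : forall t (p : st (rel_nerode S A)),
    hV S (rel_nerode S A) t p =
    if (hV S A t : {classic (st A -> B)}) == val p then sb_one S else sb_zero S.
  elim=> a ts IH p.
  pose c : {ffun 'I_(rk a) -> st (rel_nerode S A)} :=
    [ffun i => @SeqSub _ (nerode_list S A) (hV S A (ts i)) (mem_hV (ts i))].
  rewrite /= /vdelta (@sum_single _ S _ _ c); last first.
    move=> ps Hps.
    case: (boolP [exists i, ps i != c i]) => [/existsP [i Hi]|Hn].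
      rewrite (@prod_zero _ S _ _ i) ?sb_mul0l // IH.
      case: eqP => // E; case/negP: Hi; apply/eqP/val_inj.
      by rewrite /= -E ffunE.
    case/eqP: Hps; apply/ffunP => i.
    by apply/eqP; move/existsPn: Hn => /(_ i); rewrite negbK.
  rewrite prod_one ?sb_mul1l; last by move=> i; rewrite IH ffunE eqxx.
  rewrite /=; congr (if _ then _ else _); congr (_ == _).
  apply: funext => q; rewrite /vdelta; apply: eq_bigr => ps _.
  by congr sb_mul; apply: eq_bigr => i _; rewrite ffunE.
split.
  split; last split.
  - case: HSigma0 => a Ha.
    have t0 : tree rk.
      apply: (Node a) => i; exfalso; case: i; rewrite Ha.
      by [].
    rewrite /wta_nonempty Hcard.
    by case: (nerode_list S A) (mem_hV t0).
  - move=> a ps.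
    have Hw : (vdelta S A (fun i => (val (ps i) : st A -> B)) : {classic (st A -> B)})
               \in nerode_list S A.
      have Ht : forall i, exists t, hV S A t = val (ps i).
        by move=> i; apply/NL; apply: valP.
      pose ts := fun i => sval (cid (Ht i)).
      apply/NL; exists (Node a ts) => /=.
      have -> : (fun i => hV S A (ts i)) = (fun i => (val (ps i) : st A -> B)).
        by apply: funext => i; rewrite /ts; case: (cid (Ht i)).
      by [].
    exists (@SeqSub _ (nerode_list S A) _ Hw); split.
      by rewrite /= eqxx.
    move=> q' Hq'; rewrite /=; case: eqP => // E.
    by case: Hq'; apply: val_inj; rewrite /= -E.
  - move=> q; exists (fun p : st (rel_nerode S A) => (ssval p : st A -> B) q) => t.
    rewrite /run_init.
    under eq_bigr => p _ do rewrite hV_fv.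
    rewrite (@sum_single _ S _ _ (@SeqSub _ (nerode_list S A) _ (mem_hV t))).
      by rewrite Hind /= eqxx sb_mul1l.
    move=> p Hp; rewrite Hind; case: eqP => [E|_]; last by rewrite sb_mul0l.
    by case/eqP: Hp; apply: val_inj; rewrite /= -E.
move=> Bw [_ [HBw HF]].
have HF' : forall q, {F' : st Bw -> B | forall t, hV S A t q = run_init S (final_variant Bw F') t}.
  by move=> q; apply: cid; apply: HF.
pose g : st Bw -> {classic (st A -> B)} := fun p q => sval (HF' q) p.
rewrite Hcard cardE.
rewrite -(size_map g (enum (st Bw))).
apply: uniq_leq_size; first exact: (@nl_uniq _ _ _ S A).
move=> v /NL [t <-].
have [s Hs] := @crisp_run _ _ _ S Bw HBw t.
have -> : (hV S A t : {classic (st A -> B)}) = g s.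
  apply: funext => q; rewrite /g; case: (HF' q) => F' HF'' /=.
  rewrite HF'' /run_init.
  under eq_bigr => p _ do rewrite hV_fv Hs.
  rewrite (@sum_single _ S _ _ s); first by rewrite eqxx sb_mul1l.
  by move=> p /negbTE ->; rewrite sb_mul0l.
by apply: map_f; rewrite mem_enum.
Qed.
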